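(* Let $K$ be an infinite compact Hausdorff space. Then $sbiort_1(C(K))=hL(K)$, and consequently $hL(K)\leq sbiort(C(K))$.
   Context: For a Banach space $X$ and an ordinal $\alpha$, a transfinite sequence $(x_i,x_i^* )_{i<\alpha}\subseteq X\times X^*$ is semibiorthogonal if $x_i^*(x_i)=1$ for all $i$, $x_i^*(x_j)=0$ for $j<i<\alpha$, and $x_i^*(x_j)\geq0$ for $i<j<\alpha$. $sbiort(X)$ is the supremum of $|\alpha|$ over semibiorthogonal sequences of length $\alpha$. For $C(K)$ (continuous real functions, sup norm, dual = Radon measures), a measure is $1$-supported if it equals $a\delta_x$ for some $a\in\mathbb R$, $x\in K$; $sbiort_1(C(K))$ is the supremum of $|\alpha|$ over semibiorthogonal sequences $(f_i,\mu_i)_{i<\alpha}$ in $C(K)$ with every $\mu_i$ $1$-supported. $hL(K)=\sup\{L(Y):Y\subseteq K\}$, $L(Y)$ the least $\kappa$ such that every open cover of $Y$ has a subcover of size at most $\kappa$. *)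

(* Defs.v *)
From Stdlib Require Import Reals List.
Open Scope R_scope.

Section Defs.
Context {T : Type}.

Definition is_topology (opn : (T -> Prop) -> Prop) : Prop :=
  opn (fun _ => True) /\ opn (fun _ => False) /\
  (forall A B, opn A -> opn B -> opn (fun x => A x /\ B x)) /\
  (forall F : (T -> Prop) -> Prop, (forall A, F A -> opn A) ->
     opn (fun x => exists A, F A /\ A x)).

Definition top_compact (opn : (T -> Prop) -> Prop) : Prop :=
  forall U : (T -> Prop) -> Prop, (forall A, U A -> opn A) ->
    (forall x, exists A, U A /\ A x) ->
    exists l : list (T -> Prop), Forall U l /\ (forall x, exists A, In A l /\ A x).

Definition top_hausdorff (opn : (T -> Prop) -> Prop) : Prop :=
  forall x y : T, x <> y -> exists A B, opn A /\ opn B /\ A x /\ B y /\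
    (forall z, A z -> B z -> False).

Definition infinite_type : Prop := ~ exists l : list T, forall x, In x l.

Definition continuous_on (opn : (T -> Prop) -> Prop) (f : T -> R) : Prop :=
  forall a b : R, opn (fun x => a < f x < b).

Definition card_le (A C : Type) : Prop := exists g : A -> C, forall a b, g a = g b -> a = b.

(* A strict well-order on I (so (I, lt) is order-isomorphic to an ordinal). *)
Definition well_order {I : Type} (lt : I -> I -> Prop) : Prop :=
  (forall i, ~ lt i i) /\ (forall i j k, lt i j -> lt j k -> lt i k) /\
  (forall i j, lt i j \/ i = j \/ lt j i) /\ well_founded lt.

(* Elements of C(K)^*: linear functionals on C(K) bounded for the sup norm. *)
Definition in_dual (opn : (T -> Prop) -> Prop) (phi : (T -> R) -> R) : Prop :=
  (forall f g a b, continuous_on opn f -> continuous_on opn g ->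
     phi (fun x => a * f x + b * g x) = a * phi f + b * phi g) /\
  exists M : R, forall f c, continuous_on opn f -> (forall x, Rabs (f x) <= c) ->
     Rabs (phi f) <= M * c.

Definition one_supported (opn : (T -> Prop) -> Prop) (phi : (T -> R) -> R) : Prop :=
  exists (a : R) (x : T), forall f, continuous_on opn f -> phi f = a * f x.

Definition semibiorthogonal {I : Type} (lt : I -> I -> Prop)
  (f : I -> T -> R) (phi : I -> (T -> R) -> R) : Prop :=
  (forall i, phi i (f i) = 1) /\
  (forall i j, lt j i -> phi i (f j) = 0) /\
  (forall i j, lt i j -> 0 <= phi i (f j)).

Definition sbiort_le (opn : (T -> Prop) -> Prop) (C : Type) : Prop :=
  forall (I : Type) (lt : I -> I -> Prop) (f : I -> T -> R) (phi : I -> (T -> R) -> R),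
    well_order lt -> (forall i, continuous_on opn (f i)) ->
    (forall i, in_dual opn (phi i)) -> semibiorthogonal lt f phi -> card_le I C.

Definition sbiort1_le (opn : (T -> Prop) -> Prop) (C : Type) : Prop :=
  forall (I : Type) (lt : I -> I -> Prop) (f : I -> T -> R) (phi : I -> (T -> R) -> R),
    well_order lt -> (forall i, continuous_on opn (f i)) ->
    (forall i, in_dual opn (phi i)) -> (forall i, one_supported opn (phi i)) ->
    semibiorthogonal lt f phi -> card_le I C.

Definition lindelof_le (opn : (T -> Prop) -> Prop) (Y : T -> Prop) (C : Type) : Prop :=
  forall U : (T -> Prop) -> Prop, (forall A, U A -> opn A) ->
    (forall x, Y x -> exists A, U A /\ A x) ->
    exists V : (T -> Prop) -> Prop, (forall A, V A -> U A) /\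
      (forall x, Y x -> exists A, V A /\ A x) /\ card_le {A : T -> Prop | V A} C.

Definition hL_le (opn : (T -> Prop) -> Prop) (C : Type) : Prop :=
  forall Y : T -> Prop, lindelof_le opn Y C.

End Defs.

(* Main.v *)
Require Import Defs.
From Stdlib Require Import Reals List Lra Classical ClassicalEpsilon FunctionalExtensionality PropExtensionality ProofIrrelevance.
From Stdlib Require Import Wellfounded Lia FinFun.
Local Open Scope nat_scope.

Lemma sig_inj {A : Type} {P : A -> Prop} (a b : {x | P x}) :
  proj1_sig a = proj1_sig b -> a = b.
Proof.
  destruct a as [a Ha], b as [b Hb]; simpl; intros ->.
  f_equal; apply proof_irrelevance.
Qed.

Lemma cl_refl (A : Type) : card_le A A.
Proof. exists (fun a => a); auto. Qed.

Lemma cl_trans (A B C : Type) : card_le A B -> card_le B C -> card_le A C.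
Proof.
  intros [f Hf] [g Hg]; exists (fun a => g (f a)); auto.
Qed.

Lemma cl_prod (A B A' B' : Type) : card_le A B -> card_le A' B' -> card_le (A * A') (B * B').
Proof.
  intros [f Hf] [g Hg]; exists (fun p => (f (fst p), g (snd p))).
  intros [a a'] [b b'] H; simpl in H; injection H; intros; f_equal; auto.
Qed.

Lemma cl_sub (A : Type) (P Q : A -> Prop) : (forall a, P a -> Q a) ->
  card_le {a | P a} {a | Q a}.
Proof.
  intros H; exists (fun a => exist _ (proj1_sig a) (H _ (proj2_sig a))).
  intros a b E; apply sig_inj; apply (f_equal (@proj1_sig _ _)) in E; exact E.
Qed.

Lemma cl_all (A : Type) : card_le A {a : A | True}.
Proof. exists (fun a => exist _ a I); intros a b E; injection E; auto. Qed.

Lemma cl_all' (A : Type) : card_le {a : A | True} A.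
Proof. exists (@proj1_sig _ _); intros a b E; apply sig_inj; auto. Qed.

Definition emi := excluded_middle_informative.

(* Hilbert hotel *)
Lemma cl_option (A : Type) : card_le nat A -> card_le (option A) A.
Proof.
  intros [e He].
  set (f := fun o : option A => match o with
    | None => e 0
    | Some x => match emi (exists n, x = e n) with
                | left H => e (S (proj1_sig (constructive_indefinite_description _ H)))
                | right _ => x end end).
  exists f.
  assert (Hs : forall x H, x = e (proj1_sig (constructive_indefinite_description (fun n => x = e n) H))).
  { intros x H. exact (proj2_sig (constructive_indefinite_description _ H)). }
  intros [x|] [y|]; unfold f.
  - destruct (emi (exists n, x = e n)) as [Hx|Hx]; destruct (emi (exists n, y = e n)) as [Hy|Hy];
      intros E.
    + apply He in E. injection E; intro E'. rewrite (Hs x Hx), (Hs y Hy), E'. reflexivity.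
    + exfalso; apply Hy; exact (ex_intro _ _ (eq_sym E)).
    + exfalso; apply Hx; exact (ex_intro _ _ E).
    + rewrite E; reflexivity.
  - destruct (emi (exists n, x = e n)) as [Hx|Hx]; intros E.
    + apply He in E; discriminate.
    + exfalso; apply Hx; exact (ex_intro _ 0 E).
  - destruct (emi (exists n, y = e n)) as [Hy|Hy]; intros E.
    + apply He in E; discriminate.
    + exfalso; apply Hy; exact (ex_intro _ 0 (eq_sym E)).
  - reflexivity.
Qed.

Definition fin {W : Type} (P : W -> Prop) := exists l : list W, forall w, P w -> In w l.
Definition inf {W : Type} (P : W -> Prop) := card_le nat {w | P w}.

Lemma inf_or_fin {W : Type} (P : W -> Prop) : inf P \/ fin P.
Proof.
  destruct (classic (fin P)) as [H|H]; [right; exact H| left].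
  assert (Hn : forall l : list W, exists w, P w /\ ~ In w l).
  { intros l; apply NNPP; intros Hc; apply H; exists l; intros w Pw.
    apply NNPP; intros Hw; apply Hc; eauto. }
  destruct (Hn nil) as [w0 _].
  set (next := fun l : list W => epsilon (inhabits w0) (fun w => P w /\ ~ In w l)).
  assert (Hnext : forall l, P (next l) /\ ~ In (next l) l).
  { intros l; unfold next; apply epsilon_spec; apply Hn. }
  set (L := fix L n := match n with 0 => nil | S n => next (L n) :: L n end).
  assert (Hmono : forall n m, n < m -> In (next (L n)) (L m)).
  { intros n m Hnm; induction Hnm; simpl; auto. }
  exists (fun n => exist _ (next (L n)) (proj1 (Hnext (L n)))).
  intros a b E; apply (f_equal (@proj1_sig _ _)) in E; simpl in E.
  destruct (Nat.lt_trichotomy a b) as [h|[h|h]]; auto; exfalso.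
  - apply (proj2 (Hnext (L b))); rewrite <- E; apply Hmono; auto.
  - apply (proj2 (Hnext (L a))); rewrite E; apply Hmono; auto.
Qed.

Lemma inf_fin_false {W : Type} (P : W -> Prop) : inf P -> fin P -> False.
Proof.
  intros [h Hh] [l Hl].
  set (k := length l).
  assert (Hinj : FinFun.Injective (fun m => proj1_sig (h m))).
  { intros a b E; apply Hh, sig_inj, E. }
  assert (H1 := FinFun.Injective_map_NoDup Hinj (seq_NoDup (S k) 0)).
  assert (H2 : incl (map (fun m => proj1_sig (h m)) (seq 0 (S k))) l).
  { intros w Hw; apply in_map_iff in Hw; destruct Hw as [m [<- _]].
    apply Hl, proj2_sig. }
  assert (H3 := NoDup_incl_length H1 H2).
  rewrite length_map, length_seq in H3. unfold k in H3. lia.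
Qed.


Lemma wf_min {A : Type} (r : A -> A -> Prop) : well_founded r ->
  forall P : A -> Prop, (exists x, P x) -> exists x, P x /\ forall y, r y x -> ~ P y.
Proof.
  intros wf P [x Px]. induction (wf x) as [x _ IH].
  destruct (classic (exists y, r y x /\ P y)) as [[y [ry Py]]|N].
  - apply (IH y ry Py).
  - exists x; split; auto. intros y ry Py; apply N; eauto.
Qed.

Section Hess.
Variable W : Type.
Variable lt : W -> W -> Prop.
Hypothesis Hwo : well_order lt.

Let irr : forall a, ~ lt a a. Proof. apply Hwo. Qed.
Let trs : forall a b c, lt a b -> lt b c -> lt a c. Proof. apply Hwo. Qed.
Let tri : forall a b, lt a b \/ a = b \/ lt b a. Proof. apply Hwo. Qed.
Let wfl : well_founded lt. Proof. apply Hwo. Qed.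

Definition le a b := lt a b \/ a = b.
Lemma le_trans' a b c : le a b -> le b c -> le a c.
Proof. unfold le; intros [h|<-] [h'|<-]; eauto. Qed.
Lemma le_refl' a : le a a. Proof. right; auto. Qed.

Definition Seg (t : option W) (w : W) : Prop :=
  match t with Some v => lt w v | None => True end.
Definition olt (s t : option W) : Prop :=
  match s with Some a => Seg t a | None => False end.
Definition ole s t := olt s t \/ s = t.

Lemma olt_wf : well_founded olt.
Proof.
  assert (HS : forall a, Acc olt (Some a)).
  { intros a; induction (wfl a) as [a _ IH]; constructor; intros [b|] H; simpl in H.
    - apply IH; exact H.
    - contradiction. }
  intros [a|]; auto. constructor; intros [b|] H; auto; contradiction.
Qed.

Lemma olt_le_trans s t u : olt s t -> ole t u -> olt s u.
Proof.
  intros H [H'|<-]; auto.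
  destruct s as [a|], t as [b|], u as [c|]; simpl in *; eauto; contradiction.
Qed.

Lemma Seg_ole t u w : Seg t w -> ole t u -> Seg u w.
Proof. intros H H'; exact (olt_le_trans (Some w) t u H H'). Qed.

Definition mx a b := if emi (lt a b) then b else a.
Lemma mx_l a b : le a (mx a b).
Proof. unfold mx; destruct (emi (lt a b)); [left|right]; auto. Qed.
Lemma mx_r a b : le b (mx a b).
Proof.
  unfold mx; destruct (emi (lt a b)); [right; auto|].
  destruct (tri a b) as [h|[h|h]]; [contradiction| right; auto | left; auto].
Qed.
Lemma mx_cases a b : mx a b = a \/ mx a b = b.
Proof. unfold mx; destruct (emi (lt a b)); auto. Qed.

Definition lex3 (x y : W * (W * W)) : Prop :=
  lt (fst x) (fst y) \/ (fst x = fst y /\ (lt (fst (snd x)) (fst (snd y)) \/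
     (fst (snd x) = fst (snd y) /\ lt (snd (snd x)) (snd (snd y))))).

Lemma wf_lex3 : well_founded lex3.
Proof.
  intros [m [a b]]. revert a b.
  induction (wfl m) as [m _ IHm]. intros a.
  induction (wfl a) as [a _ IHa]. intros b.
  induction (wfl b) as [b _ IHb].
  constructor. intros [m' [a' b']] H. unfold lex3 in H; simpl in H.
  destruct H as [H|[-> [H|[-> H]]]].
  - apply IHm; auto.
  - apply IHa; auto.
  - apply IHb; auto.
Qed.

Definition key (p : W * W) := (mx (fst p) (snd p), p).
Definition god (p q : W * W) := lex3 (key p) (key q).
Lemma god_wf : well_founded god.
Proof. exact (wf_inverse_image _ _ lex3 key wf_lex3). Qed.

Lemma god_tot p q : god p q \/ p = q \/ god q p.
Proof.
  destruct p as [a b], q as [c d]; unfold god, lex3, key; simpl.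
  destruct (tri (mx a b) (mx c d)) as [h|[h|h]]; [left; left; auto| |right; right; left; auto].
  destruct (tri a c) as [h1|[h1|h1]]; [left; right; split; auto| |right; right; right; split; auto].
  subst c. destruct (tri b d) as [h2|[h2|h2]].
  - left; right; split; auto.
  - subst; right; left; auto.
  - right; right; right; split; auto.
Qed.

Lemma god_mx q p : god q p -> le (mx (fst q) (snd q)) (mx (fst p) (snd p)).
Proof.
  unfold god, lex3, key; simpl. intros [h|[h _]]; [left|right]; auto.
Qed.

Lemma hess_seg : forall t, inf (Seg t) ->
  card_le ({w | Seg t w} * {w | Seg t w}) {w | Seg t w}.
Proof.
  intros t0. induction (olt_wf t0) as [t _ IH]. intros Xinf.
  destruct (wf_min olt olt_wf (fun v => ole v t /\ card_le {w | Seg t w} {w | Seg v w}))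
    as [v [[vt Xv] vmin]].
  { exists t; split; [right; auto| apply cl_refl]. }
  assert (YX : card_le {w | Seg v w} {w | Seg t w}).
  { apply cl_sub; intros w H; exact (Seg_ole v t w H vt). }
  assert (Yinf : inf (Seg v)) by exact (cl_trans _ _ _ Xinf Xv).
  assert (Yinit : forall u, olt u v -> ~ card_le {w | Seg v w} {w | Seg u w}).
  { intros u Hu HY. apply (vmin u Hu). split.
    - left; exact (olt_le_trans u v t Hu vt).
    - exact (cl_trans _ _ _ Xv HY). }
  assert (Key : forall m, Seg v m ->
     ~ card_le {w | Seg v w} {p : W * W | le (fst p) m /\ le (snd p) m}).
  { intros m Hm HY.
    destruct (inf_or_fin (Seg (Some m))) as [Hi|Hf].
    - assert (Hmt : olt (Some m) t) by exact (olt_le_trans (Some m) v t Hm vt).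
      assert (Sq := IH (Some m) Hmt Hi).
      assert (E1 : card_le {w | le w m} (option {w | Seg (Some m) w})).
      { exists (fun w => match emi (lt (proj1_sig w) m) with
                | left H => Some (exist (Seg (Some m)) (proj1_sig w) H)
                | right _ => None end).
        intros [a Ha] [b Hb]; simpl.
        destruct (emi (lt a m)) as [h1|h1]; destruct (emi (lt b m)) as [h2|h2]; intros E;
          try discriminate.
        - injection E; intros; apply sig_inj; auto.
        - apply sig_inj; simpl. destruct Ha as [Ha|Ha]; [contradiction|].
          destruct Hb as [Hb|Hb]; [contradiction|]. congruence. }
      assert (E2 : card_le {p : W * W | le (fst p) m /\ le (snd p) m}
                     ({w | le w m} * {w | le w m})).
      { exists (fun p => (exist _ (fst (proj1_sig p)) (proj1 (proj2_sig p)),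
                          exist _ (snd (proj1_sig p)) (proj2 (proj2_sig p)))).
        intros [[a b] Hab] [[c d] Hcd] E; simpl in E. injection E; intros; apply sig_inj; simpl; congruence. }
      assert (E3 := cl_option _ Hi).
      apply (Yinit (Some m) Hm).
      apply (cl_trans _ _ _ HY), (cl_trans _ _ _ E2), (cl_trans _ _ _ (cl_prod _ _ _ _ E1 E1)).
      apply (cl_trans _ _ _ (cl_prod _ _ _ _ E3 E3)), Sq.
    - destruct Hf as [l Hl].
      apply (inf_fin_false (fun p : W * W => le (fst p) m /\ le (snd p) m)).
      + exact (cl_trans _ _ _ Yinf HY).
      + exists (list_prod (m :: l) (m :: l)). intros [a b] [Ha Hb]; simpl in Ha, Hb.
        apply in_prod_iff; split.
        * destruct Ha as [Ha|<-]; [right; apply Hl; exact Ha| left; auto].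
        * destruct Hb as [Hb|<-]; [right; apply Hl; exact Hb| left; auto]. }
  (* the Goedel injection *)
  assert (inhW : inhabited W).
  { destruct Yinf as [e _]; exact (inhabits (proj1_sig (e 0))). }
  set (YY := fun q : W * W => Seg v (fst q) /\ Seg v (snd q)).
  set (F := fun (p : W * W) (rec : forall q, god q p -> W) =>
    epsilon inhW (fun y => Seg v y /\ forall q (H : god q p), YY q -> rec q H <> y)).
  set (h := Fix god_wf (fun _ => W) F).
  assert (h_eq : forall p, h p = epsilon inhW
     (fun y => Seg v y /\ forall q, god q p -> YY q -> h q <> y)).
  { intros p; unfold h; rewrite Fix_eq; [reflexivity|].
    intros x f g Hfg; unfold F; f_equal; apply functional_extensionality; intros y.
    apply propositional_extensionality; split; intros [Hy Hq]; split; auto;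
      intros q H Yq; [rewrite <- Hfg | rewrite Hfg]; auto. }
  assert (h_spec : forall p, YY p -> Seg v (h p) /\ forall q, god q p -> YY q -> h q <> h p).
  { intros p Yp.
    assert (Hex : exists y, Seg v y /\ forall q, god q p -> YY q -> h q <> y).
    { apply NNPP; intros N.
      set (m := mx (fst p) (snd p)).
      assert (Hm : Seg v m).
      { destruct (mx_cases (fst p) (snd p)) as [E|E]; unfold m; rewrite E; apply Yp. }
      apply (Key m Hm).
      assert (Hq : forall y : {w | Seg v w}, exists q, (god q p /\ YY q) /\ h q = proj1_sig y).
      { intros [y Hy]; simpl. apply NNPP; intros N2; apply N; exists y; split; auto.
        intros q Hq Yq E; apply N2; exists q; auto. }
      exists (fun y => exist (fun p : W * W => le (fst p) m /\ le (snd p) m)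
        (proj1_sig (constructive_indefinite_description _ (Hq y)))
        (let s := proj2_sig (constructive_indefinite_description _ (Hq y)) in
         let g := god_mx _ _ (proj1 (proj1 s)) in
         conj (le_trans' _ _ _ (mx_l _ _) g) (le_trans' _ _ _ (mx_r _ _) g))).
      intros y1 y2 E. apply (f_equal (@proj1_sig _ _)) in E; simpl in E.
      apply sig_inj.
      rewrite <- (proj2 (proj2_sig (constructive_indefinite_description _ (Hq y1)))).
      rewrite <- (proj2 (proj2_sig (constructive_indefinite_description _ (Hq y2)))).
      rewrite E; reflexivity. }
    generalize (epsilon_spec inhW _ Hex). rewrite <- h_eq. auto. }
  assert (YYinj : card_le ({w | Seg v w} * {w | Seg v w}) {w | Seg v w}).
  { exists (fun pr => exist _ (h (proj1_sig (fst pr), proj1_sig (snd pr)))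
       (proj1 (h_spec (proj1_sig (fst pr), proj1_sig (snd pr))
          (conj (proj2_sig (fst pr)) (proj2_sig (snd pr)))))).
    intros [[a Ha] [b Hb]] [[c Hc] [d Hd]] E.
    apply (f_equal (@proj1_sig _ _)) in E; simpl in E.
    destruct (god_tot (a, b) (c, d)) as [G|[G|G]].
    - exfalso. refine (proj2 (h_spec (c, d) (conj Hc Hd)) (a, b) G (conj Ha Hb) E).
    - injection G; intros; subst; f_equal; apply sig_inj; auto.
    - exfalso. refine (proj2 (h_spec (a, b) (conj Ha Hb)) (c, d) G (conj Hc Hd) (eq_sym E)). }
  apply (cl_trans _ _ _ (cl_prod _ _ _ _ Xv Xv)), (cl_trans _ _ _ YYinj), YX.
Qed.

End Hess.

Lemma hess_opt (C : Type) (lt : C -> C -> Prop) : well_order lt ->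
  card_le nat C -> card_le (C * option C) C.
Proof.
  intros Hwo Hn.
  assert (Hi : inf (Seg C lt None)).
  { apply (cl_trans _ _ _ Hn); apply cl_all. }
  assert (H := hess_seg C lt Hwo None Hi).
  apply (cl_trans _ _ _ (cl_prod _ _ _ _ (cl_refl C) (cl_option C Hn))).
  apply (cl_trans _ _ _ (cl_prod _ _ _ _ (cl_all C) (cl_all C))).
  apply (cl_trans _ _ _ H), cl_all'.
Qed.


Definition cid' {A : Type} {P : A -> Prop} (H : exists x, P x) := constructive_indefinite_description P H.

Lemma right_sep_bound (T I C : Type) (opn : (T -> Prop) -> Prop)
  (lt : I -> I -> Prop) (Hwo : well_order lt) (x : I -> T) (U : I -> T -> Prop)
  (Uo : forall i, opn (U i)) (xin : forall i, U i (x i))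
  (rs : forall i j, lt i j -> ~ U i (x j))
  (hL : hL_le opn C) (Hn : card_le nat C) (Hh : card_le (C * option C) C) :
  card_le I C.
Proof.
  destruct Hwo as [irr [trs [tri wfl]]].
  apply NNPP; intros NI.
  assert (HS : exists S : I -> Prop, ~ card_le {k | S k} C /\
             forall j, S j -> card_le {k | lt k j} C).
  { destruct (classic (exists i, ~ card_le {k | lt k i} C)) as [Hb|Hb].
    - destruct (wf_min lt wfl _ Hb) as [i0 [Hi0 Hmin]].
      exists (fun k => lt k i0); split; auto.
      intros j Hj; apply NNPP; apply Hmin; auto.
    - exists (fun _ => True); split.
      + intros Hc; apply NI; exact (cl_trans _ _ _ (cl_all I) Hc).
      + intros j _; apply NNPP; intros Hc; apply Hb; eauto. }
  destruct HS as [S [NS HSj]].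
  destruct Hn as [en _]. set (c0 := en 0).
  set (e := fun k => match emi (card_le {k' | lt k' k} C) with
              | left H => proj1_sig (cid' H) | right _ => fun _ => c0 end).
  assert (He : forall k, S k -> forall a b, e k a = e k b -> a = b).
  { intros k Hk a b; unfold e. destruct (emi (card_le {k' | lt k' k} C)) as [H|H].
    - apply (proj2_sig (cid' H)).
    - exfalso; apply H, HSj, Hk. }
  destruct (hL (fun z => exists k, S k /\ z = x k) (fun A => exists k, S k /\ A = U k))
    as [V [VU [Vcov [gV HgV]]]].
  { intros A [k [_ ->]]; apply Uo. }
  { intros z [k [Sk ->]]; exists (U k); split; eauto. }
  assert (Hk : forall A : {A | V A}, exists k, S k /\ proj1_sig A = U k).
  { intros [A HA]; simpl; apply VU, HA. }
  set (kf := fun A => proj1_sig (cid' (Hk A))).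
  assert (Hkf : forall A, S (kf A) /\ proj1_sig A = U (kf A)).
  { intros A; exact (proj2_sig (cid' (Hk A))). }
  assert (HA : forall j : {j | S j}, exists A : {A | V A}, proj1_sig A (x (proj1_sig j))).
  { intros [j Sj]; simpl. destruct (Vcov (x j)) as [A [VA Ax]]; [eauto|].
    exists (exist _ A VA); exact Ax. }
  set (Af := fun j => proj1_sig (cid' (HA j))).
  assert (HAf : forall j, proj1_sig (Af j) (x (proj1_sig j))).
  { intros j; exact (proj2_sig (cid' (HA j))). }
  assert (Hle : forall j, lt (proj1_sig j) (kf (Af j)) \/ proj1_sig j = kf (Af j)).
  { intros j. destruct (tri (proj1_sig j) (kf (Af j))) as [h|[h|h]]; auto.
    exfalso. apply (rs _ _ h). rewrite <- (proj2 (Hkf (Af j))). apply HAf. }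
  set (phi := fun j : {j | S j} => (gV (Af j),
     match emi (lt (proj1_sig j) (kf (Af j))) with
     | left H => Some (e (kf (Af j)) (exist _ (proj1_sig j) H))
     | right _ => None end)).
  assert (Hphi : forall j1 j2, phi j1 = phi j2 -> j1 = j2).
  { intros j1 j2 E. unfold phi in E. injection E; intros E2 E1. clear E.
    apply HgV in E1. apply sig_inj.
    assert (Ek : kf (Af j1) = kf (Af j2)) by (rewrite E1; reflexivity).
    revert E2.
    destruct (emi (lt (proj1_sig j1) (kf (Af j1)))) as [h1|h1];
    destruct (emi (lt (proj1_sig j2) (kf (Af j2)))) as [h2|h2]; intros E2; try discriminate.
    - injection E2; intros E3. clear E2. revert h1 h2 E3. rewrite Ek. intros h1 h2 E3.
      apply He in E3.
      + apply (f_equal (@proj1_sig _ _)) in E3; exact E3.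
      + apply Hkf.
    - destruct (Hle j1) as [h|h]; [contradiction|].
      destruct (Hle j2) as [h'|h']; [contradiction|]. congruence. }
  apply NS. destruct Hh as [gh Hgh].
  exists (fun j => gh (phi j)). intros a b E; apply Hphi, Hgh, E.
Qed.

Lemma sep_list (T : Type) (opn : (T -> Prop) -> Prop) :
  is_topology opn -> top_hausdorff opn ->
  forall (l : list T) (x : T), exists O, opn O /\ O x /\ forall y, In y l -> y <> x -> ~ O y.
Proof.
  intros [HT [_ [HI _]]] Hh l x. induction l as [|a l IH].
  - exists (fun _ => True); split; [exact HT| split; [exact I| intros y []]].
  - destruct IH as [O [Oo [Ox HO]]].
    destruct (classic (a = x)) as [<-|nax].
    + exists O; split; auto; split; auto. intros y [<-|Hy] Hne; [congruence|auto].
    + destruct (Hh x a (fun E => nax (eq_sym E))) as [A [B [Ao [Bo [Ax [Ba AB]]]]]].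
      exists (fun z => O z /\ A z); split; [apply HI; auto|]. split; [auto|].
      intros y [<-|Hy] Hne [Oy Ay].
      * exact (AB _ Ay Ba).
      * exact (HO y Hy Hne Oy).
Qed.

Lemma hL_nat (T C : Type) (opn : (T -> Prop) -> Prop) :
  is_topology opn -> top_hausdorff opn -> @infinite_type T -> hL_le opn C ->
  card_le nat C.
Proof.
  intros Htop Hh Hinf hL.
  assert (Hfin : forall l : list T, card_le {z | In z l} C).
  { intros l.
    set (Os := fun x => proj1_sig (cid' (sep_list T opn Htop Hh l x))).
    assert (HOs : forall x, opn (Os x) /\ Os x x /\ forall y, In y l -> y <> x -> ~ Os x y).
    { intros x; exact (proj2_sig (cid' (sep_list T opn Htop Hh l x))). }
    destruct (hL (fun z => In z l) (fun A => exists x, In x l /\ A = Os x))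
      as [V [VU [Vcov [gV HgV]]]].
    { intros A [x [_ ->]]; apply HOs. }
    { intros z Hz; exists (Os z); split; [eauto| apply HOs]. }
    assert (HA : forall z : {z | In z l}, exists A : {A | V A}, proj1_sig A (proj1_sig z)).
    { intros [z Hz]; simpl. destruct (Vcov z Hz) as [A [VA Az]].
      exists (exist _ A VA); exact Az. }
    exists (fun z => gV (proj1_sig (cid' (HA z)))).
    intros z1 z2 E. apply HgV in E.
    assert (H1 := proj2_sig (cid' (HA z1))). assert (H2 := proj2_sig (cid' (HA z2))).
    simpl in H1, H2. rewrite E in H1.
    set (A := proj1_sig (cid' (HA z2))) in *.
    destruct (VU _ (proj2_sig A)) as [x [Hx EA]].
    rewrite EA in H1, H2.
    apply sig_inj.
    destruct (classic (proj1_sig z1 = x)) as [e1|e1];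
      [|exfalso; exact (proj2 (proj2 (HOs x)) _ (proj2_sig z1) e1 H1)].
    destruct (classic (proj1_sig z2 = x)) as [e2|e2];
      [|exfalso; exact (proj2 (proj2 (HOs x)) _ (proj2_sig z2) e2 H2)].
    congruence. }
  assert (Hlen : forall n, exists l : list T, NoDup l /\ length l = n).
  { induction n as [|n [l [Hl Hln]]].
    - exists nil. split. constructor. reflexivity.
    - assert (Hx : exists x, ~ In x l).
      { apply NNPP; intros N; apply Hinf; exists l; intros x; apply NNPP; intros Hx; apply N; eauto. }
      destruct Hx as [x Hx]. exists (x :: l). split.
      + constructor; auto.
      + simpl; congruence. }
  destruct (inf_or_fin (fun _ : C => True)) as [Hi|[lc Hlc]].
  - exact (cl_trans _ _ _ Hi (cl_all' C)).
  - exfalso. destruct (Hlen (S (length lc))) as [l [Hl Hln]].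
    destruct (Hfin l) as [g Hg].
    destruct l as [|z0 l']; [discriminate|].
    set (c0 := g (exist _ z0 (in_eq z0 l'))).
    set (G := fun z : T => match emi (In z (z0 :: l')) with
                | left H => g (exist _ z H) | right _ => c0 end).
    assert (HG : NoDup (map G (z0 :: l'))).
    { apply NoDup_map_NoDup_ForallPairs; auto.
      intros a b Ha Hb. unfold G.
      destruct (emi (In a (z0 :: l'))) as [h1|h1]; [|contradiction].
      destruct (emi (In b (z0 :: l'))) as [h2|h2]; [|contradiction].
      intros E; apply Hg in E. apply (f_equal (@proj1_sig _ _)) in E; exact E. }
    assert (HI : incl (map G (z0 :: l')) lc) by (intros c _; apply Hlc; auto).
    assert (H3 := NoDup_incl_length HG HI).
    rewrite length_map, Hln in H3. lia.
Qed.

Lemma hL_to_sbiort1 (T C : Type) (opn : (T -> Prop) -> Prop)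
  (ltC : C -> C -> Prop) (woC : well_order ltC) :
  is_topology opn -> top_hausdorff opn -> @infinite_type T ->
  hL_le opn C -> sbiort1_le opn C.
Proof.
  intros Htop Hh Hinf hL I lt f phi wo cont dual one [s1 [s2 s3]].
  assert (Hn := hL_nat T C opn Htop Hh Hinf hL).
  assert (Hhe := hess_opt C ltC woC Hn).
  set (a := fun i => proj1_sig (cid' (one i))).
  set (x := fun i => proj1_sig (cid' (proj2_sig (cid' (one i))))).
  assert (Hax : forall i g, continuous_on opn g -> phi i g = (a i * g (x i))%R).
  { intros i; exact (proj2_sig (cid' (proj2_sig (cid' (one i))))). }
  assert (H1 : forall i, (a i * f i (x i) = 1)%R).
  { intros i; rewrite <- Hax; auto. }
  assert (H0 : forall i j, lt j i -> f j (x i) = 0%R).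
  { intros i j Hji. assert (E := s2 i j Hji). rewrite Hax in E; auto.
    assert (Ha : a i <> 0%R) by (intros E'; assert (H := H1 i); rewrite E' in H; lra).
    apply Rmult_integral in E; destruct E as [E|E]; [contradiction|exact E]. }
  set (Fam := fun j (A : T -> Prop) => (exists b, A = (fun y => 0 < f j y < b)%R) \/
                                   (exists c, A = (fun y => c < f j y < 0)%R)).
  set (U := fun j z => exists A, Fam j A /\ A z).
  destruct Htop as [HT [HE [HI HU]]].
  assert (Uo : forall j, opn (U j)).
  { intros j; apply HU. intros A [[b ->]|[c ->]]; apply cont. }
  assert (Unz : forall j z, U j z <-> f j z <> 0%R).
  { intros j z; split.
    - intros [A [[[b ->]|[c ->]] Az]]; simpl in Az; lra.
    - intros Hz. destruct (Rlt_or_le 0 (f j z)) as [Hp|Hp].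
      + exists (fun y => 0 < f j y < f j z + 1)%R; split; [left; eauto| simpl; lra].
      + exists (fun y => f j z - 1 < f j y < 0)%R; split; [right; eauto| simpl; lra]. }
  apply (right_sep_bound T I C opn lt wo x U Uo).
  - intros i; apply Unz. intros E; assert (H := H1 i); rewrite E in H; lra.
  - intros i j Hij HU'. apply Unz in HU'. apply HU', H0, Hij.
  - exact hL.
  - exact Hn.
  - exact Hhe.
Qed.

Lemma sbiort1_to_hL (T C : Type) (opn : (T -> Prop) -> Prop)
  (ltT : T -> T -> Prop) (woT : well_order ltT) :
  is_topology opn ->
  (forall (x : T) (O : T -> Prop), opn O -> O x ->
    exists g : T -> R, continuous_on opn g /\ g x = 1%R /\
      (forall z, ~ O z -> g z = 0%R) /\ (forall z, (0 <= g z)%R)) ->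
  sbiort1_le opn C -> hL_le opn C.
Proof.
  intros Htop Ury Hs Y U Uo Ucov.
  destruct woT as [irr [trs [tri wfT]]].
  set (Ach := fun z => match emi (exists A, U A /\ A z) with
     | left H => proj1_sig (cid' H) | right _ => fun _ => True end).
  assert (HAch : forall z, Y z -> U (Ach z) /\ Ach z z).
  { intros z Yz; unfold Ach. destruct (emi (exists A, U A /\ A z)) as [H|H].
    - exact (proj2_sig (cid' H)).
    - exfalso; apply H, Ucov, Yz. }
  set (Fs := fun (x : T) (rec : forall y, ltT y x -> Prop) =>
     Y x /\ forall y (H : ltT y x), rec y H -> ~ Ach y x).
  set (sel := Fix wfT (fun _ => Prop) Fs).
  assert (sel_eq : forall x, sel x = (Y x /\ forall y, ltT y x -> sel y -> ~ Ach y x)).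
  { intros x; unfold sel; rewrite Fix_eq; [reflexivity|].
    intros z g1 g2 Hg; unfold Fs. apply propositional_extensionality; split;
      intros [Hy Hq]; (split; [exact Hy|]); intros q H Hr; apply (Hq q H).
    - rewrite Hg; exact Hr.
    - rewrite <- Hg; exact Hr. }
  set (I := {x | sel x}).
  set (lt := fun i j : I => ltT (proj1_sig i) (proj1_sig j)).
  assert (wo : well_order lt).
  { split; [|split; [|split]].
    - intros i; apply irr.
    - intros i j k; apply trs.
    - intros i j; destruct (tri (proj1_sig i) (proj1_sig j)) as [h|[h|h]]; auto.
      right; left; apply sig_inj; exact h.
    - exact (wf_inverse_image _ _ ltT (@proj1_sig _ _) wfT). }
  assert (HselY : forall i : I, Y (proj1_sig i)).
  { intros [x Hx]; simpl. rewrite sel_eq in Hx; apply Hx. }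
  assert (Hg : forall i : I, exists g : T -> R, continuous_on opn g /\ g (proj1_sig i) = 1%R /\
      (forall z, ~ Ach (proj1_sig i) z -> g z = 0%R) /\ (forall z, (0 <= g z)%R)).
  { intros i. destruct (HAch _ (HselY i)) as [HU Hx]. apply Ury; auto. }
  set (f := fun i => proj1_sig (cid' (Hg i))).
  assert (Hf : forall i : I, continuous_on opn (f i) /\ f i (proj1_sig i) = 1%R /\
      (forall z, ~ Ach (proj1_sig i) z -> f i z = 0%R) /\ (forall z, (0 <= f i z)%R)).
  { intros i; exact (proj2_sig (cid' (Hg i))). }
  set (phi := fun (i : I) (h : T -> R) => h (proj1_sig i)).
  assert (HIC : card_le I C).
  { apply (Hs I lt f phi wo).
    - intros i; apply Hf.
    - intros i; split.
      + intros g1 g2 c1 c2 _ _; reflexivity.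
      + exists 1%R. intros g c _ Hc. unfold phi. rewrite Rmult_1_l. apply Hc.
    - intros i; exists 1%R, (proj1_sig i). intros g _; unfold phi; ring.
    - split; [|split].
      + intros i; apply Hf.
      + intros i j Hji. unfold phi. apply Hf.
        destruct i as [xi Hxi]; simpl. pose proof Hxi as Hx'. rewrite sel_eq in Hx'.
        apply (proj2 Hx'); [exact Hji| exact (proj2_sig j)].
      + intros i j _; apply Hf. }
  exists (fun A => exists i : I, A = Ach (proj1_sig i)). split; [|split].
  - intros A [i ->]. apply HAch, HselY.
  - intros y Yy. destruct (classic (sel y)) as [Hy|Hy].
    + exists (Ach y); split; [exists (exist _ y Hy); reflexivity| apply HAch, Yy].
    + rewrite sel_eq in Hy.
      assert (Hz : exists z, ltT z y /\ sel z /\ Ach z y).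
      { apply NNPP; intros N; apply Hy; split; auto. intros z Hz Sz Az; apply N; eauto. }
      destruct Hz as [z [_ [Sz Az]]].
      exists (Ach z); split; [exists (exist _ z Sz); reflexivity| exact Az].
  - destruct HIC as [gI HgI].
    set (ch := fun A : {A | exists i : I, A = Ach (proj1_sig i)} => proj1_sig (cid' (proj2_sig A))).
    exists (fun A => gI (ch A)).
    intros A1 A2 E. apply HgI in E. apply sig_inj.
    rewrite (proj2_sig (cid' (proj2_sig A1))), (proj2_sig (cid' (proj2_sig A2))).
    unfold ch in E. rewrite E. reflexivity.
Qed.

Module WOM.
From mathcomp Require Import all_boot all_classical wochoice.

Lemma wo_exists (A : Type) : exists lt : A -> A -> Prop, Defs.well_order lt.
Proof.
pose T' := {classic A}.
have [R HR] := well_ordering_principle T'.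
have minP : forall P : T' -> Prop, (exists x, P x) ->
    exists z, P z /\ (forall x, P x -> R z x) /\ (forall z', P z' -> (forall x, P x -> R z' x) -> z' = z).
  move=> P [x Px].
  have ne : wochoice.nonempty [pred y | `[< P y >]] by exists x; rewrite inE.
  have [z [[zP zmin] zu]] := HR _ ne.
  exists z; split; first by move: zP; rewrite inE.
  split.
    by move=> y Py; apply: zmin; rewrite inE.
  move=> z' Pz' mz'; symmetry; apply: zu; split; first by rewrite inE.
  by move=> y; rewrite inE; apply: mz'.
have refl : forall x : T', R x x.
  move=> x; have [z [zx [zm _]]] := minP (fun y => y = x) (ex_intro _ x erefl).
  by rewrite -zx; apply: zm.
have tot : forall x y : T', R x y \/ R y x.
  move=> x y; have [z [[]-> [zm _]]] := minP (fun w => w = x \/ w = y) (ex_intro _ x (or_introl erefl)).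
    by left; apply: zm; right.
  by right; apply: zm; left.
have anti : forall x y : T', R x y -> R y x -> x = y.
  move=> x y Rxy Ryx.
  have [z [_ [_ zu]]] := minP (fun w => w = x \/ w = y) (ex_intro _ x (or_introl erefl)).
  rewrite (zu x (or_introl erefl)); last by move=> w [] ->.
  rewrite (zu y (or_intror erefl)) //; by move=> w [] ->.
have trR : forall x y z : T', R x y -> R y z -> R x z.
  move=> x y z Rxy Ryz.
  have [m [mP [mm _]]] := minP (fun w => w = x \/ w = y \/ w = z) (ex_intro _ x (or_introl erefl)).
  case: mP => [mx|[my|mz]]; subst m.
  - by apply: mm; right; right.
  - have E := anti _ _ Rxy (mm x (or_introl erefl)); by rewrite E.
  - have E := anti _ _ Ryz (mm y (or_intror (or_introl erefl))); subst z.
    have E := anti _ _ Rxy (mm x (or_introl erefl)); by rewrite E.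
exists (fun x y : A => R x y /\ x <> y); split; [|split; [|split]].
- by move=> a [_].
- move=> a b c [Rab nab] [Rbc nbc]; split; first exact: trR Rab Rbc.
  move=> ac; subst c; apply: nab; exact: anti.
- move=> a b; case: (Classical_Prop.classic (a = b)) => [->|nab]; first by right; left.
  by have [H|H] := tot a b; [left|right; right]; split => // E; apply: nab.
- move=> a; apply: NNPP => Na.
  have [z [Nz [zm _]]] := minP (fun z => ~ Acc (fun x y : A => R x y /\ x <> y) z) (ex_intro _ a Na).
  apply: Nz; constructor => y [Ryz nyz]; apply: NNPP => Ny.
  by apply: nyz; apply: anti => //; apply: zm.
Qed.
End WOM.

Module Bridge.
From HB Require Import structures.
From mathcomp Require Import all_boot all_order all_algebra.
From mathcomp Require Import all_classical all_reals all_analysis.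
From mathcomp Require Import Rstruct Rstruct_topology finmap.
Import Order.TTheory GRing.Theory Num.Theory.
Local Open Scope classical_set_scope.

Section Bridge.
Variable (T : Type) (opn : (T -> Prop) -> Prop).
Hypothesis Htop : is_topology opn.
Hypothesis Hcpt : top_compact opn.
Hypothesis Hhd : top_hausdorff opn.
Variable t0 : T.

Definition TT : Type := T.
HB.instance Definition _ := gen_eqMixin TT.
HB.instance Definition _ := gen_choiceMixin TT.
HB.instance Definition _ := isPointed.Build TT t0.

Let opT : opn (@setT TT).
Proof. by case: Htop. Qed.
Let opI : setI_closed (opn : set_system TT).
Proof. move=> A B; case: Htop => _ [_ [H _]]; exact: H. Qed.
Let opU : forall (I : Type) (f : I -> set TT), (forall i, opn (f i)) ->
    opn (\bigcup_i f i).
Proof.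
move=> I f Hf; case: Htop => _ [_ [_ H]].
have := H (fun A => exists i, A = f i).
have -> : (fun x => exists A, (exists i, A = f i) /\ A x) = \bigcup_i f i.
  apply/funext => x; apply/propext; split.
    by case=> A [[i ->] fx]; exists i.
  by case=> i _ fx; exists (f i); split => //; exists i.
apply; by move=> A [i ->].
Qed.

HB.instance Definition _ := isOpenTopological.Build TT opT opI opU.

Lemma openE' (A : set TT) : open A <-> opn A.
Proof.
split.
  rewrite openE => oA.
  have -> : A = \bigcup_(B : {B : set TT & opn B /\ B `<=` A}) projT1 B.
    rewrite predeqE => p; split=> [|[B _ Bp]]; last by have [_] := projT2 B; apply.
    by move=> /oA; rewrite /interior => -[B [Bop Bp sBA]]; exists (existT _ B (conj Bop sBA)).
  by apply: opU => B; have [] := projT2 B.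
move=> oA; rewrite openE => p Ap; exists A; split => //.
Qed.

Lemma TT_hausdorff : hausdorff_space TT.
Proof.
rewrite open_hausdorff => x y /eqP xy.
have [A [B [oA [oB [Ax [By AB]]]]]] := Hhd _ _ xy.
exists (A, B) => /=; first by split; apply: mem_set.
split; [exact/openE'|exact/openE'|].
apply/eqP; rewrite predeqE => z; split => // [[]]; exact: AB.
Qed.

Lemma TT_compact : compact [set: TT].
Proof.
rewrite (@compact_cover TT) => I D f fo cov.
have H1 : forall A, (fun A => exists i, D i /\ A = f i) A -> opn A.
  by move=> A [i [Di ->]]; apply/openE'; apply: fo.
have H2 : forall x, exists A, (fun A => exists i, D i /\ A = f i) A /\ A x.
  move=> x; have [i Di fx] := cov x Logic.I; exists (f i); split => //; by exists i.
have [l [Fl covl]] := Hcpt _ H1 H2.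
suff [D' [sD' cD']] : exists D' : {fset I}, {subset D' <= D} /\
   (forall x, (exists A, In A l /\ A x) -> cover [set` D'] f x).
  by exists D' => // x _; apply: cD'.
elim: l Fl {covl} => [|A l IH] Fl.
  by exists fset0; split => // x [A []].
have /Forall_cons_iff [[i [Di ->]] Fl'] := Fl.
have [D' [sD' cD']] := IH Fl'.
exists (i |` D')%fset; split.
  move=> j; rewrite !inE => /orP [/eqP ->|jD]; [exact: mem_set | exact: sD'].
move=> x [B [[<-|Bl] Bx]].
  by exists i => //=; rewrite !inE eqxx.
have [j jD' fjx] := cD' x (ex_intro _ B (conj Bl Bx)).
by exists j => //=; rewrite !inE jD' orbT.
Qed.

Lemma urysohn_pt (x : TT) (O : set TT) : opn O -> O x ->
  exists g : TT -> R, continuous_on opn g /\ g x = R1 /\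
    (forall z, ~ O z -> g z = R0) /\ (forall z, Rle R0 (g z)).
Proof.
move=> oO Ox.
have nT : normal_space TT by apply: compact_normal; [exact: TT_hausdorff|exact: TT_compact].
have cA : closed (~` O) by apply: open_closedC; apply/openE'.
have cB : closed [set x] := @accessible_closed_set1 _ (hausdorff_accessible TT_hausdorff) x.
have AB : ~` O `&` [set x] = set0.
  rewrite predeqE => z; split => // -[nOz zx]; apply: nOz; by rewrite zx.
have := @normal_uniform_separator TT nT _ _ cA cB AB.
move/(@uniform_separatorP TT R) => [g [cg rg g0 g1]].
exists g; split; last split; last split.
- move=> a b; apply/openE'.
  have -> : (fun z => Rlt a (g z) /\ Rlt (g z) b) = g @^-1` `]a, b[.
    apply/funext => z; apply/propext; rewrite /= in_itv /=; split.
      by case=> /RltP -> /RltP ->.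
    by move=> /andP [/RltP ? /RltP ?].
  apply: (proj1 (continuousP g)) => //; exact: (@interval_open R (BSide false a) (BSide true b)).
- by apply: g1; exists x.
- by move=> z nOz; apply: g0; exists z.
- move=> z; have := rg _ (ex_intro2 _ _ z Logic.I erefl); rewrite /= in_itv /= => /andP [/RleP ? _] //.
Qed.

End Bridge.

Lemma urysohn_point (T : Type) (opn : (T -> Prop) -> Prop) :
  is_topology opn -> top_compact opn -> top_hausdorff opn ->
  forall (x : T) (O : T -> Prop), opn O -> O x ->
  exists g : T -> R, continuous_on opn g /\ g x = R1 /\
    (forall z, ~ O z -> g z = R0) /\ (forall z, Rle R0 (g z)).
Proof. move=> H1 H2 H3 x O; exact: (@urysohn_pt T opn H1 H2 H3 x x O). Qed.

End Bridge.

Theorem mainTheorem16 (T : Type) (opn : (T -> Prop) -> Prop) :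
  is_topology opn -> top_compact opn -> top_hausdorff opn -> @infinite_type T ->
  (forall C : Type, sbiort1_le opn C <-> hL_le opn C) /\
  (forall C : Type, sbiort_le opn C -> hL_le opn C).
Proof.
  intros Htop Hcpt Hhd Hinf.
  assert (Ury := Bridge.urysohn_point T opn Htop Hcpt Hhd).
  destruct (WOM.wo_exists T) as [ltT woT].
  assert (P1 : forall C, sbiort1_le opn C <-> hL_le opn C).
  { intros C; split.
    - apply (sbiort1_to_hL T C opn ltT woT Htop Ury).
    - destruct (WOM.wo_exists C) as [ltC woC].
      apply (hL_to_sbiort1 T C opn ltC woC Htop Hhd Hinf). }
  split; [exact P1|].
  intros C Hs. apply P1. intros I lt f phi wo cont dual _ sem.
  exact (Hs I lt f phi wo cont dual sem).
Qed.
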